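(* Let $\psi(t,b_1,b_3)$ be a function satisfying, for all values of its arguments, (R1) $\psi(qt,b_1,b_3)=b_1\psi(t,b_1,b_3)+(1-b_1)\psi(qt,b_1/q,b_3)$, (R2) $b_3\psi(qt,b_1,b_3)=\psi(t,b_1,b_3)+(b_3-1)\psi(t,b_1,qb_3)$, (R3) $qtb_1b_3\psi(qt,b_1,b_3)=(qtb_1-1)\psi(t,b_1,b_3)+\psi(t,qb_1,b_3)$, (R4) $qt\psi(qt,b_1,b_3)=(qtb_1-1)\psi(t,b_1,b_3)+\psi(qt,b_1,b_3/q)$. Fix $b_1,b_3$ and define $$f(t)=qtb_3(1-b_1)\frac{\psi(qt,b_1/q,qb_3)}{\psi(t,b_1,qb_3)},\qquad g(t)=-\frac{\psi(t,b_1,b_3)}{\psi(t,b_1,qb_3)}.$$ Then $(f,g)$ is a solution of dP$(A_4^{(1)})[b_1,1,b_3]$, i.e. of the system below with $b_2=1$.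
   Context: $q$ is a fixed nonzero complex constant (generic, e.g. not a root of unity); all parameters are generic so that all denominators appearing are nonzero. For parameters $b_1,b_2,b_3$, the equation dP$(A_4^{(1)})[b_1,b_2,b_3]$ is the system for functions $f(t),g(t)$, with $\overline{f}=f(qt)$, $\overline{g}=g(qt)$ and $s=s(t)=\frac{1}{qb_1b_2b_3t}$: $$\overline{g}\,g=\frac{qt}{b_2}\,\frac{(f+b_3)(f+1)}{f+1/s},\qquad \overline{f}\,f=\frac{1}{s}\,\frac{(\overline{g}+1/b_2)(\overline{g}+1/(b_1b_2))}{\overline{g}+qt/b_2},$$ required to hold for all $t$. *)

(* Defs.v *)
From HB Require Import structures.
From mathcomp Require Import all_boot all_order all_algebra.
Set Implicit Arguments. Unset Strict Implicit. Unset Printing Implicit Defensive.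
Import Order.TTheory GRing.Theory Num.Theory.
Local Open Scope ring_scope.

Definition dP_s {C : fieldType} (q b1 b2 b3 t : C) : C := 1 / (q * b1 * b2 * b3 * t).

Definition dPA4_eqs {C : fieldType} (q b1 b2 b3 : C) (f g : C -> C) (t : C) : Prop :=
  let s := dP_s q b1 b2 b3 t in
  g (q * t) * g t = (q * t / b2) * ((f t + b3) * (f t + 1) / (f t + 1 / s)) /\
  f (q * t) * f t =
    (1 / s) * ((g (q * t) + 1 / b2) * (g (q * t) + 1 / (b1 * b2)) / (g (q * t) + q * t / b2)).

(* Main.v *)
Require Import Defs.
From HB Require Import structures.
From mathcomp Require Import all_boot all_order all_algebra.
From mathcomp Require Import ring.
Import Order.TTheory GRing.Theory Num.Theory.
Local Open Scope ring_scope.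

Theorem proposition2p1 (C : numClosedFieldType) (q b1 b3 : C) (psi : C -> C -> C -> C)
  (hq : q != 0) (hb1 : b1 != 0) (hb3 : b3 != 0)
  (R1 : forall t x y, psi (q * t) x y = x * psi t x y + (1 - x) * psi (q * t) (x / q) y)
  (R2 : forall t x y, y * psi (q * t) x y = psi t x y + (y - 1) * psi t x (q * y))
  (R3 : forall t x y, q * t * x * y * psi (q * t) x y = (q * t * x - 1) * psi t x y + psi t (q * x) y)
  (R4 : forall t x y, q * t * psi (q * t) x y = (q * t * x - 1) * psi t x y + psi (q * t) x (y / q)) :
  let f := fun t => q * t * b3 * (1 - b1) * (psi (q * t) (b1 / q) (q * b3) / psi t b1 (q * b3)) in
  let g := fun t => - (psi t b1 b3 / psi t b1 (q * b3)) in
  forall t : C,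
    (* genericity: all denominators occurring in f, g and the system are nonzero *)
    t != 0 ->
    psi t b1 (q * b3) != 0 ->
    psi (q * t) b1 (q * b3) != 0 ->
    f t + 1 / dP_s q b1 1 b3 t != 0 ->
    g (q * t) + q * t / 1 != 0 ->
    dPA4_eqs q b1 1 b3 f g t.
Proof.
move=> f g t ht hB hD hd1 hd2.
have qb3 : q * b3 / q = b3 by rewrite mulrC mulKf.
have e1 := R1 t b1 (q*b3).
have e2 := R2 t b1 b3.
have e4 := R4 t b1 (q*b3). rewrite qb3 in e4.
have e1' := R1 (q*t) b1 (q*b3).
have e2' := R2 (q*t) b1 b3.
have e4' := R4 (q*t) b1 (q*b3). rewrite qb3 in e4'.
move: hd1 hd2; rewrite /dPA4_eqs /dP_s /f /g.
move: e1 e2 e4 e1' e2' e4' hB hD.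
set A := psi t b1 b3. set B := psi t b1 (q*b3). set X := psi (q*t) (b1/q) (q*b3).
set D := psi (q*t) b1 (q*b3). set E := psi (q*t) b1 b3.
set Y := psi (q*(q*t)) (b1/q) (q*b3). set F := psi (q*(q*t)) b1 (q*b3).
set G := psi (q*(q*t)) b1 b3.
move=> e1 e2 e4 e1' e2' e4' hB hD hd1 hd2.
have eE : E = q*t*D - (q*t*b1-1)*B by rewrite e4; ring.
have eA : A = b3*E - (b3-1)*B by rewrite e2; ring.
have eX : (1-b1)*X = D - b1*B by rewrite e1; ring.
have eY : (1-b1)*Y = F - b1*D by rewrite e1'; ring.
have eG : G = (E + (b3-1)*D)/b3 by rewrite -e2'; field.
have hqt : q*(q*t) != 0 by rewrite !mulf_neq0.
have eF : F = ((q*(q*t)*b1-1)*D + G)/(q*(q*t)).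
 by rewrite -e4'; field; rewrite ht hq.
have hf : q * t * b3 * (1 - b1) * (X / B) = q*t*b3*(D-b1*B)/B
  by rewrite -eX; rewrite !mulrA.
have hfq : q * (q * t) * b3 * (1 - b1) * (Y / D) = q*(q*t)*b3*(F-b1*D)/D
  by rewrite -eY; rewrite !mulrA.
rewrite hf in hd1 *; rewrite hfq eF eG eA eE.
rewrite eE in hd2.
have hqtb : q*t*b1 - 1 != 0.
  move: hd2; apply: contraNneq => h.
  by rewrite h mul0r subr0 mulfK // divr1 addNr.
split; field. all: rewrite ?ht ?hq ?hb1 ?hb3 ?hB ?hD ?hqtb //=.
- have -> : q * t * b3 * (D - b1 * B) + q * b1 * b3 * t * B = q*t*b3*D by ring.
  by rewrite !mulf_neq0.
- have -> : - (q * t * D - (q * t * b1 - 1) * B) + q * t * D = (q*t*b1-1)*B by ring.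
  by rewrite !mulf_neq0.
Qed.
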